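(* Let $n=2^m$ for a positive integer $m$. A set $C\subseteq X^n$ is an $(n,5,n-1;2^{n-1}/n)_3$ code (i.e., $|C|=2^{n-1}/n$ and any two distinct words of $C$ are at Hamming distance at least $5$) if and only if the following two conditions hold: (1) both $e(C)$ and $o(C)$ are binary codes of length $n$, size $2^{n-1}/n$ and minimum distance at least $4$; (2) whenever $\mathbf{x}_1,\mathbf{x}_2\in e(C)$ and $\mathbf{y}_1,\mathbf{y}_2\in o(C)$ satisfy $d(\mathbf{x}_1,\mathbf{y}_1)=d(\mathbf{x}_2,\mathbf{y}_2)=1$ and $d(\mathbf{x}_1,\mathbf{x}_2)=4$, we have $\mathbf{x}_1-\mathbf{x}_2\neq \mathbf{y}_1-\mathbf{y}_2$ (difference taken coordinatewise modulo $2$).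
   Context: $F^n$ is the set of binary words of length $n$; $X^n$ is the set of words of length $n$ over $\{*,0,1\}$ with exactly one $*$ (equivalently, ternary words of length $n$ and weight $n-1$). $d(\cdot,\cdot)$ denotes Hamming distance (number of differing coordinates) on $X^n\cup F^n$. A word $\mathbf{x}\in X^n$ is identified with the pair of binary words obtained by replacing $*$ by $0$ and by $1$; the one of even weight is $e(\mathbf{x})$, the one of odd weight is $o(\mathbf{x})$. For $C\subseteq X^n$, $e(C)=\{e(\mathbf{c}):\mathbf{c}\in C\}$, $o(C)=\{o(\mathbf{c}):\mathbf{c}\in C\}$. *)

(* Defs.v *)
From mathcomp Require Import all_boot.
Set Implicit Arguments. Unset Strict Implicit. Unset Printing Implicit Defensive.

(* Ternary words over {*,0,1}: [None] encodes [*], [Some b] encodes the bit b. *)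
Definition tword (n : nat) := {ffun 'I_n -> option bool}.
Definition bword (n : nat) := {ffun 'I_n -> bool}.

Definition inX (n : nat) (x : tword n) : bool := #|[set i | x i == None]| == 1.

Definition hd (T : eqType) (n : nat) (f g : {ffun 'I_n -> T}) : nat :=
  #|[set i | f i != g i]|.

Definition weight (n : nat) (w : bword n) : nat := #|[set i | w i]|.

Definition fill (n : nat) (x : tword n) (b : bool) : bword n :=
  [ffun i => odflt b (x i)].

Definition ev (n : nat) (x : tword n) : bword n :=
  if ~~ odd (weight (fill x false)) then fill x false else fill x true.
Definition od (n : nat) (x : tword n) : bword n :=
  if odd (weight (fill x false)) then fill x false else fill x true.

Definition evC (n : nat) (C : {set tword n}) : {set bword n} := [set ev x | x in C].
Definition odC (n : nat) (C : {set tword n}) : {set bword n} := [set od x | x in C].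

Definition bdiff (n : nat) (x y : bword n) : bword n := [ffun i => x i (+) y i].

Definition is_code (T : finType) (n M d : nat) (C : {set {ffun 'I_n -> T}}) : Prop :=
  #|C| = M /\ (forall x y, x \in C -> y \in C -> x != y -> d <= hd x y).

(* Main.v *)
Require Import Defs.
From mathcomp Require Import all_boot.
From mathcomp Require Import zify.
From Stdlib Require Import Lia.
Set Implicit Arguments. Unset Strict Implicit. Unset Printing Implicit Defensive.

Lemma cardsE' (n : nat) (P : pred 'I_n) : #|[set k | P k]| = \sum_k P k.
Proof.
rewrite -sum1_card big_mkcond /=; apply: eq_bigr => i _; rewrite inE.
by case: (P i).
Qed.

Lemma hdE (T : eqType) n (f g : {ffun 'I_n -> T}) : hd f g = \sum_i (f i != g i).
Proof. by rewrite /hd cardsE'. Qed.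

Lemma weightE n (w : bword n) : weight w = \sum_i w i.
Proof. by rewrite /weight cardsE'. Qed.

Lemma hd_sym (T : eqType) n (f g : {ffun 'I_n -> T}) : hd f g = hd g f.
Proof. by rewrite !hdE; apply: eq_bigr => i _; rewrite eq_sym. Qed.

Lemma hd_tri (T : eqType) n (f g h : {ffun 'I_n -> T}) : hd f h <= hd f g + hd g h.
Proof.
rewrite !hdE -big_split /=; apply: leq_sum => i _.
case: (f i =P g i) => [->|_]; first by rewrite add0n.
by case: (f i != h i); case: (g i != h i).
Qed.

Lemma hd0 (T : eqType) n (f g : {ffun 'I_n -> T}) : hd f g = 0 -> f = g.
Proof.
move/cards0_eq => H; apply/ffunP => i.
have : i \notin [set i | f i != g i] by rewrite H inE.
by rewrite inE negbK => /eqP.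
Qed.

Lemma hdxx (T : eqType) n (f : {ffun 'I_n -> T}) : hd f f = 0.
Proof. by rewrite hdE big1 // => i _; rewrite eqxx. Qed.

Lemma odd_sum n (F : 'I_n -> nat) : odd (\sum_i F i) = \big[addb/false]_i odd (F i).
Proof. exact: (big_morph odd oddD). Qed.

Lemma hd_odd n (f g : bword n) : odd (hd f g) = odd (weight f) (+) odd (weight g).
Proof.
rewrite hdE !weightE !odd_sum -big_split /=; apply: eq_bigr => i _.
by case: (f i); case: (g i).
Qed.

Lemma starP n (x : tword n) : inX x -> exists i, forall k, (x k == None) = (k == i).
Proof.
move=> /cards1P [i Hi]; exists i => k.
have : k \in [set k | x k == None] = (k \in [set i]) by rewrite Hi.
by rewrite !inE.
Qed.

Lemma sum_eqi n (i : 'I_n) : \sum_k (k == i : nat) = 1.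
Proof.
by rewrite (bigD1 i) //= eqxx big1 // => k /negbTE ->.
Qed.

Lemma sum_none n (x : tword n) : inX x -> \sum_k (x k == None : nat) = 1.
Proof.
by move=> H; rewrite -cardsE'; apply/eqP.
Qed.

Definition be n (x : tword n) := odd (weight (fill x false)).
Lemma evk n (x : tword n) k : ev x k = odflt (be x) (x k).
Proof. by rewrite /ev /be; case: (odd _) => /=; rewrite ffunE. Qed.
Lemma odk n (x : tword n) k : od x k = odflt (~~ be x) (x k).
Proof. by rewrite /od /be; case: (odd _) => /=; rewrite ffunE. Qed.
Lemma evE n (x : tword n) : ev x = fill x (be x).
Proof. by apply/ffunP => k; rewrite evk ffunE. Qed.
Lemma odE n (x : tword n) : od x = fill x (~~ be x).
Proof. by apply/ffunP => k; rewrite odk ffunE. Qed.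

Lemma weight_fill n (x : tword n) b : inX x ->
  weight (fill x b) = b + weight (fill x false).
Proof.
move=> /starP [i Hi]; rewrite !weightE.
rewrite (eq_bigr (fun k => ((k == i) && b : nat) + odflt false (x k))).
  rewrite big_split /=; congr (_ + _); last by apply: eq_bigr => k _; rewrite ffunE.
  rewrite (bigD1 i) //= eqxx big1 ?addn0 // => k /negbTE ->; by [].
move=> k _; rewrite ffunE; have := Hi k.
by case: (x k) => [c|] /=; case: (k == i) => //= _; case: b.
Qed.

Lemma ev_even n (x : tword n) : inX x -> odd (weight (ev x)) = false.
Proof.
move=> H; rewrite evE weight_fill // oddD -/(be x); by case: (be x).
Qed.
Lemma od_odd n (x : tword n) : inX x -> odd (weight (od x)) = true.
Proof.
move=> H; rewrite odE weight_fill // oddD -/(be x); by case: (be x).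
Qed.

Lemma PC1 (a b : option bool) p q :
  (a != b) <= (odflt p a != odflt q b) + (a == None) + (b == None).
Proof. by case: a b p q => [[]|] [[]|] [] []. Qed.
Lemma PC2 (a b : option bool) p q :
  (odflt p a (+) odflt q b) = (odflt (~~p) a (+) odflt (~~q) b) ->
  (a != b) <= (odflt p a != odflt q b).
Proof. by case: a b p q => [[]|] [[]|] [] []. Qed.
Lemma PC3 (a b : option bool) p q :
  odflt p a = odflt q b -> odflt (~~p) a = odflt (~~q) b -> a = b.
Proof. by case: a b p q => [[]|] [[]|] [] []. Qed.
Lemma PC4 (a b : option bool) p q : ~~ ((a == None) && (b == None)) ->
  (odflt p a != odflt q b) + (odflt (~~p) a != odflt (~~q) b) + (a == None) + (b == None)
   <= 2 * (a != b).
Proof. by case: a b p q => [[]|] [[]|] [] []. Qed.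
Lemma PC5 (a b : option bool) p q : (a == None) = (b == None) ->
  (odflt p a != odflt q b) <= (a != b) + (a == None).
Proof. by case: a b p q => [[]|] [[]|] [] []. Qed.
Lemma PC6 (a b : option bool) p q : (a == None) = (b == None) ->
  (odflt p a (+) odflt q b) = (odflt (~~p) a (+) odflt (~~q) b).
Proof. by case: a b p q => [[]|] [[]|] [] []. Qed.
Lemma PC7 (a : option bool) p : (odflt p a != odflt (~~p) a) = (a == None).
Proof. by case: a p => [[]|] []. Qed.

Lemma hd_eo n (x : tword n) : inX x -> hd (ev x) (od x) = 1.
Proof.
move=> H; rewrite hdE -(sum_none H); apply: eq_bigr => k _.
by rewrite evk odk PC7.
Qed.

Lemma fwd_bound n (x y : tword n) p q : inX x -> inX y ->
  hd x y <= hd (fill x p) (fill y q) + 2.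
Proof.
move=> Hx Hy; rewrite !hdE.
apply: (@leq_trans (\sum_k ((fill x p k != fill y q k) + (x k == None) + (y k == None)))).
  by apply: leq_sum => k _; rewrite !ffunE; exact: PC1.
by rewrite !big_split /= (sum_none Hx) (sum_none Hy) -addnA.
Qed.

Lemma sum2 n (F : 'I_n -> nat) : \sum_k 2 * F k = 2 * \sum_k F k.
Proof. by rewrite big_distrr. Qed.

Lemma even4 (E : nat) : 3 <= E -> odd E = false -> 4 <= E.
Proof. by case: E => [|[|[|[|E]]]]. Qed.
Lemma even6 (E : nat) : 4 <= E -> E != 4 -> odd E = false -> 6 <= E.
Proof. by case: E => [|[|[|[|[|[|E]]]]]]. Qed.

Theorem lemma2 (m : nat) (n : nat) (C : {set tword n}) :
  0 < m -> n = 2 ^ m ->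
  (forall c, c \in C -> inX c) ->
  (is_code (2 ^ n.-1 %/ n) 5 C <->
   (is_code (2 ^ n.-1 %/ n) 4 (evC C) /\ is_code (2 ^ n.-1 %/ n) 4 (odC C)) /\
   (forall x1 x2 y1 y2 : bword n,
      x1 \in evC C -> x2 \in evC C -> y1 \in odC C -> y2 \in odC C ->
      hd x1 y1 = 1 -> hd x2 y2 = 1 -> hd x1 x2 = 4 ->
      bdiff x1 x2 != bdiff y1 y2)).
Proof.
move=> _ _ HX; split.
- move=> [HC Hd].
  have Hev : forall x y, x \in C -> y \in C -> x != y -> 4 <= hd (ev x) (ev y).
    move=> x y xC yC nxy; apply: even4.
      have := fwd_bound (be x) (be y) (HX _ xC) (HX _ yC).
      rewrite -!evE; have := Hd _ _ xC yC nxy; move=> h5 h; rewrite -(leq_add2r 2); exact: leq_trans h5 h.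
    by rewrite hd_odd !ev_even ?HX.
  have Hod : forall x y, x \in C -> y \in C -> x != y -> 4 <= hd (od x) (od y).
    move=> x y xC yC nxy; apply: even4.
      have := fwd_bound (~~ be x) (~~ be y) (HX _ xC) (HX _ yC).
      rewrite -!odE; have := Hd _ _ xC yC nxy; move=> h5 h; rewrite -(leq_add2r 2); exact: leq_trans h5 h.
    by rewrite hd_odd !od_odd ?HX.
  have injev : {in C &, injective (@ev n)}.
    move=> x y xC yC E; apply/eqP; apply/negPn/negP => nxy.
    by have := Hev _ _ xC yC nxy; rewrite E hdxx.
  have injod : {in C &, injective (@od n)}.
    move=> x y xC yC E; apply/eqP; apply/negPn/negP => nxy.
    by have := Hod _ _ xC yC nxy; rewrite E hdxx.
  split; first split.
  + split; first by rewrite /evC card_in_imset.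
    move=> x' y' /imsetP [x xC ->] /imsetP [y yC ->] ne; apply: Hev => //.
    by apply: contraNneq ne => ->.
  + split; first by rewrite /odC card_in_imset.
    move=> x' y' /imsetP [x xC ->] /imsetP [y yC ->] ne; apply: Hod => //.
    by apply: contraNneq ne => ->.
  move=> x1 x2 y1 y2 /imsetP [c1 c1C ->] /imsetP [c2 c2C ->]
    /imsetP [d1 d1C ->] /imsetP [d2 d2C ->] h1 h2 h4.
  have same : forall c d, c \in C -> d \in C -> hd (ev c) (od d) = 1 -> c = d.
    move=> c d cC dC h; apply/eqP; apply/negPn/negP => ncd.
    have := Hev _ _ cC dC ncd.
    have := hd_tri (ev c) (od d) (ev d); rewrite h [hd (od d) _]hd_sym hd_eo ?HX //; lia.
  have e1 := same _ _ c1C d1C h1; have e2 := same _ _ c2C d2C h2; subst d1 d2.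
  apply/negP => /eqP Heq.
  have nc : c1 != c2 by apply: contra_eqN h4 => /eqP ->; rewrite hdxx.
  have := Hd _ _ c1C c2C nc.
  have : hd c1 c2 <= hd (ev c1) (ev c2).
    rewrite !hdE; apply: leq_sum => k _.
    have := congr1 (fun f : bword n => f k) Heq; rewrite !ffunE !evk !odk.
    exact: PC2.
  lia.
- move=> [[[HCe Hde] [HCo Hdo]] H2].
  have eo : forall x y, x \in C -> y \in C -> ev x = ev y -> od x = od y.
    move=> x y xC yC E; apply/eqP; apply/negPn/negP => ne.
    have := Hdo _ _ (imset_f _ xC) (imset_f _ yC) ne.
    have := hd_tri (od x) (ev x) (od y); rewrite [hd (od x) (ev x)]hd_sym hd_eo ?HX // E hd_eo ?HX //.
    by move=> h1 h2; have := leq_trans h2 h1.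
  have oe : forall x y, x \in C -> y \in C -> od x = od y -> ev x = ev y.
    move=> x y xC yC E; apply/eqP; apply/negPn/negP => ne.
    have := Hde _ _ (imset_f _ xC) (imset_f _ yC) ne.
    have := hd_tri (ev x) (od x) (ev y); rewrite hd_eo ?HX // E [hd (od y) _]hd_sym hd_eo ?HX //.
    by move=> h1 h2; have := leq_trans h2 h1.
  have eq2 : forall x y : tword n, ev x = ev y -> od x = od y -> x = y.
    move=> x y E O; apply/ffunP => k.
    have := congr1 (fun f : bword n => f k) E; have := congr1 (fun f : bword n => f k) O.
    rewrite !evk !odk => h1 h2; exact: PC3 h2 h1.
  have injev : {in C &, injective (@ev n)}.
    by move=> x y xC yC E; apply: eq2 => //; apply: eo.
  split; first by rewrite -HCe /evC card_in_imset.
  move=> x y xC yC nxy.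
  have nev : ev x != ev y by apply: contraNneq nxy => E; apply/eqP; apply: eq2 => //; apply: eo.
  have nod : od x != od y by apply: contraNneq nxy => O; apply/eqP; apply: eq2 => //; apply: oe.
  have HE := Hde _ _ (imset_f _ xC) (imset_f _ yC) nev.
  have HO := Hdo _ _ (imset_f _ xC) (imset_f _ yC) nod.
  have [i Hi] := starP (HX _ xC); have [j Hj] := starP (HX _ yC).
  case: (eqVneq i j) => [eij | nij].
  + subst j.
    have sameN : forall k, (x k == None) = (y k == None) by move=> k; rewrite Hi Hj.
    have HE6 : 6 <= hd (ev x) (ev y).
      apply: even6 => //; last by rewrite hd_odd !ev_even ?HX.
      apply/eqP => h4.
      have := H2 _ _ _ _ (imset_f _ xC) (imset_f _ yC) (imset_f _ xC) (imset_f _ yC)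
        (hd_eo (HX _ xC)) (hd_eo (HX _ yC)) h4.
      move/negP; apply; apply/eqP/ffunP => k; rewrite !ffunE !evk !odk.
      exact: PC6.
    have : hd (ev x) (ev y) <= hd x y + 1.
      rewrite !hdE -(sum_none (HX _ xC)) -big_split /=; apply: leq_sum => k _.
      rewrite !evk; exact: PC5.
    lia.
  + have : \sum_k ((ev x k != ev y k) + (od x k != od y k) + (x k == None) + (y k == None))
          <= \sum_k 2 * (x k != y k).
      apply: leq_sum => k _; rewrite !evk !odk; apply: PC4; rewrite Hi Hj.
      by apply: contra nij => /andP [/eqP <- /eqP <-].
    rewrite sum2 !big_split /= (sum_none (HX _ xC)) (sum_none (HX _ yC)) -!hdE.
    move: HE HO; set E := hd (ev x) _; set O := hd (od x) _; set D := hd x _.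
    lia.
Qed.
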